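(* Let $X$ be an ideally $\mathsf{T_{z}S}$-closed semigroup and $e\in E(X)\cap Z(X)$ an idempotent such that the semigroup $H_e\cap Z(X)$ is bounded. Then the set $\big(\sqrt[\infty]{H_e}\cap Z(X)\big)\setminus H_e$ is finite.
   Context: $\mathsf{T_{z}S}$ is the class of Hausdorff zero-dimensional topological semigroups; a semigroup is $\mathsf{T_{z}S}$-closed if for every isomorphic topological embedding of it (discrete topology) into some $Y\in\mathsf{T_{z}S}$ the image is closed in $Y$. $X$ is ideally $\mathsf{T_{z}S}$-closed if for every ideal $I\subseteq X$ (possibly empty; $IX\cup XI\subseteq I$) the Rees quotient $X/I$ (collapsing $I$ to one point, $X/\emptyset=X$) is $\mathsf{T_{z}S}$-closed. $E(X)$: idempotents; $H_e$: maximal subgroup containing $e$; $Z(X)$: center; $\sqrt[\infty]{H_e}=\{x\in X:\exists n\in\mathbb N\ (x^n\in H_e)\}$. A semigroup is bounded if there is $n\ge1$ with $x^n$ idempotent for all $x$. *)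

(* Defs.v *)
From HB Require Import structures.
From mathcomp Require Import all_boot all_order.
From mathcomp Require Import all_classical all_reals all_analysis.
Set Implicit Arguments. Unset Strict Implicit. Unset Printing Implicit Defensive.
Local Open Scope classical_set_scope.

Definition assoc_op (S : Type) (m : S -> S -> S) : Prop :=
  forall a b c, m a (m b c) = m (m a b) c.

Definition zero_dim (Y : topologicalType) : Prop :=
  forall (U : set Y) (y : Y), open U -> U y ->
    exists V : set Y, [/\ clopen V, V y & V `<=` U].

Definition TzS (Y : topologicalType) (m : Y -> Y -> Y) : Prop :=
  [/\ assoc_op m, hausdorff_space Y, zero_dim Y &
      continuous (fun p : Y * Y => m p.1 p.2)].

(* A semigroup is given by a carrier A : set S closed under mul
   (associativity of mul on A is part of the context). *)
Definition TzS_closed (S : Type) (A : set S) (mul : S -> S -> S) : Prop :=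
  forall (Y : topologicalType) (m : Y -> Y -> Y), TzS m ->
  forall h : S -> Y,
    {in A &, injective h} ->
    (forall a b, A a -> A b -> h (mul a b) = m (h a) (h b)) ->
    (* h(A) is a discrete subspace of Y, i.e. h is a topological embedding
       of the discrete space A *)
    (forall a, A a -> exists U : set Y, open U /\ U `&` (h @` A) = [set h a]) ->
    closed (h @` A).

(* Ideals (possibly empty) of the semigroup (X, mul) with carrier the whole type. *)
Definition is_ideal (X : Type) (mul : X -> X -> X) (I : set X) : Prop :=
  forall x y, I y -> I (mul x y) /\ I (mul y x).

(* Rees quotient X/I, carried by option X: Some x for x \notin I, and None
   standing for the collapsed ideal I (present only if I is nonempty).
   For I empty this is a copy of X. *)
Definition rees_carrier (X : Type) (I : set X) : set (option X) :=
  fun o => match o with Some x => ~ I x | None => I !=set0 end.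

Definition rees_mul (X : Type) (mul : X -> X -> X) (I : set X)
  (o1 o2 : option X) : option X :=
  match o1, o2 with
  | Some a, Some b => if `[< I (mul a b) >] then None else Some (mul a b)
  | _, _ => None
  end.

Definition ideally_TzS_closed (X : Type) (mul : X -> X -> X) : Prop :=
  forall I : set X, is_ideal mul I -> TzS_closed (rees_carrier I) (rees_mul mul I).

Definition idempotent_el (X : Type) (mul : X -> X -> X) (x : X) : Prop :=
  mul x x = x.

Definition sg_center (X : Type) (mul : X -> X -> X) : set X :=
  [set z | forall x, mul z x = mul x z].

(* H_e: the maximal subgroup containing the idempotent e, i.e. the group of
   units of the monoid eXe. *)
Definition maxsubgroup (X : Type) (mul : X -> X -> X) (e : X) : set X :=
  [set x | mul e x = x /\ mul x e = x /\
           exists y, [/\ mul e y = y, mul y e = y, mul x y = e & mul y x = e]].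

(* spow mul x n = x^(n+1) *)
Fixpoint spow (X : Type) (mul : X -> X -> X) (x : X) (n : nat) : X :=
  match n with 0 => x | n'.+1 => mul (spow mul x n') x end.

Definition inf_root (X : Type) (mul : X -> X -> X) (H : set X) : set X :=
  [set x | exists n : nat, H (spow mul x n)].

Definition bounded_on (X : Type) (mul : X -> X -> X) (A : set X) : Prop :=
  exists n : nat, forall x, A x -> idempotent_el mul (spow mul x n).

(* Main.v *)
Require Import Defs.
From mathcomp Require Import all_boot all_order.
From mathcomp Require Import all_classical all_reals all_analysis.
From HB Require Import structures.
From mathcomp Require Import zify.
From Stdlib Require Import Lia.
Set Implicit Arguments. Unset Strict Implicit. Unset Printing Implicit Defensive.
Local Open Scope classical_set_scope.

Definition ultra (T : Type) (q : set (set T)) : Prop :=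
  [/\ q setT, ~ q set0, (forall A B, q A -> q B -> q (A `&` B)),
      (forall A B, A `<=` B -> q A -> q B) & (forall A, q A \/ q (~` A))].

Section UltraLemmas.
Variables (T : Type) (q : set (set T)) (hq : ultra q).
Lemma uT : q setT. Proof. by case: hq. Qed.
Lemma u0 : ~ q set0. Proof. by case: hq. Qed.
Lemma uI A B : q A -> q B -> q (A `&` B). Proof. by case: hq => _ _ h _ _; apply: h. Qed.
Lemma uS A B : A `<=` B -> q A -> q B. Proof. by case: hq => _ _ _ h _; apply: h. Qed.
Lemma uC A : q A \/ q (~` A). Proof. by case: hq => _ _ _ _ h; apply: h. Qed.
Lemma uex A : q A -> exists x, A x.
Proof. move=> hA; apply: contrapT => hn; apply: u0; apply: uS hA => x Ax; apply: hn; by exists x. Qed.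
Lemma udisj A B : q A -> q B -> (forall x, A x -> B x -> False) -> False.
Proof. move=> hA hB h; have [x [Ax Bx]] := uex (uI hA hB); exact: h Ax Bx. Qed.
Lemma uNC A : ~ q A -> q (~` A).
Proof. by move=> h; case: (uC A). Qed.
End UltraLemmas.

Definition pr (T : Type) (a : T) : set (set T) := fun A => A a.

Lemma pr_ultra T (a : T) : ultra (pr a).
Proof.
rewrite /ultra /pr; split.
- by [].
- by [].
- by move=> A B ? ?; split.
- by move=> A B AB; apply: AB.
- by move=> A; case: (pselect (A a)) => h; [left|right].
Qed.

Definition imgf (T U : Type) (f : T -> U) (q : set (set T)) : set (set U) :=
  fun A => q (fun a => A (f a)).

Lemma imgf_ultra T U (f : T -> U) q : ultra q -> ultra (imgf f q).
Proof.
move=> hq; rewrite /ultra /imgf; split.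
- exact: uT hq.
- exact: u0 hq.
- by move=> A B hA hB /=; apply: (uS hq _ (uI hq hA hB)) => x [] ? ?; split.
- by move=> A B AB hB /=; apply: (uS hq _ hB) => x; apply: AB.
- by move=> A; apply: (uC hq (fun a => A (f a))).
Qed.

Definition smul (T : Type) (f : T -> T -> T) (P Q : set (set T)) : set (set T) :=
  fun A => P (fun a => Q (fun b => A (f a b))).

Lemma smulA T (f : T -> T -> T) (fA : forall a b c, f (f a b) c = f a (f b c)) P Q R :
  smul f (smul f P Q) R = smul f P (smul f Q R).
Proof.
rewrite /smul; apply: funext => A; congr P; apply: funext => a; congr Q;
  apply: funext => b; congr R; apply: funext => c; by rewrite fA.
Qed.

Definition allowed X (D : set X) (P : set (set (option X))) :=
  (exists a, P = pr a) \/ (ultra P /\ P (Some @` D)).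

Lemma allowed_ultra X (D : set X) P : allowed D P -> ultra P.
Proof. by case=> [[a ->]|[]] //; apply: pr_ultra. Qed.

Definition Yt (X : Type) (D : set X) := {P : set (set (option X)) | allowed D P}.
HB.instance Definition _ X D := gen_eqMixin (@Yt X D).
HB.instance Definition _ X D := gen_choiceMixin (@Yt X D).

Lemma yult X D (P : @Yt X D) : ultra (sval P).
Proof. exact: allowed_ultra (svalP P). Qed.

Definition bs X D (A : set (option X)) : set (@Yt X D) := [set P | sval P A].
Arguments bs {X} D A.

Definition yopen X D : set (set (@Yt X D)) :=
  [set O : set (@Yt X D) | forall P : @Yt X D, O P ->
     exists A : set (option X), sval P A /\ bs D A `<=` O].

Lemma yopenT X D : yopen (@setT (@Yt X D)).
Proof. move=> P _; exists setT; split=> //; exact: uT (yult P). Qed.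

Lemma yopenI X D : setI_closed (@yopen X D).
Proof.
move=> A B hA hB P [/hA [A' [PA' HA]] /hB [B' [PB' HB]]].
exists (A' `&` B'); split; first by apply: (uI (yult P)).
move=> Q QAB; split; [apply: HA|apply: HB]; rewrite /bs/=.
  by apply: (uS (yult Q) _ QAB) => x [].
by apply: (uS (yult Q) _ QAB) => x [].
Qed.

Lemma yopenU X D (I : Type) (f : I -> set (@Yt X D)) :
  (forall i, yopen (f i)) -> yopen (\bigcup_i f i).
Proof.
move=> hf P [i _ fi]; have [A [PA HA]] := hf i P fi.
by exists A; split=> // Q QA; exists i => //; apply: HA.
Qed.

HB.instance Definition _ X D :=
  isOpenTopological.Build (@Yt X D) (@yopenT X D) (@yopenI X D) (@yopenU X D).

Section Ytop.
Variables (X : Type) (D : set X).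
Local Notation Y := (@Yt X D).

Lemma bs_open (A : set (option X)) : open (bs D A).
Proof. by move=> P PA; exists A; split. Qed.

Lemma bsC (A : set (option X)) : ~` bs D A = bs D (~` A).
Proof.
apply/seteqP; split=> P /=; rewrite /bs/=.
  by move=> h; exact: (uNC (yult P) h).
by move=> h hA; exact: (udisj (yult P) hA h (fun x a na => na a)).
Qed.

Lemma bs_clopen (A : set (option X)) : clopen (bs D A).
Proof.
split; first exact: bs_open.
by rewrite -(setCK (bs D A)) closedC bsC; apply: bs_open.
Qed.

Lemma nbhs_bs (P : Y) (A : set (option X)) : sval P A -> nbhs P (bs D A).
Proof. by move=> PA; exists (bs D A); split=> //; apply: bs_open. Qed.

Lemma nbhs_bsE (P : Y) (V : set Y) : nbhs P V -> exists A, sval P A /\ bs D A `<=` V.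
Proof.
move=> [B [oB BP BV]]; have [A [PA HA]] := oB P BP.
by exists A; split=> //; apply: subset_trans BV.
Qed.

Lemma Y_hausdorff : hausdorff_space Y.
Proof.
move=> P Q hc; apply: contrapT => nPQ.
have : sval P <> sval Q by move=> h; apply: nPQ; apply: eq_sig_hprop h => x; exact: Prop_irrelevance.
move=> nsPQ.
have [A hA] : exists A, ~ (sval P A <-> sval Q A).
  apply: contrapT => hn; apply: nsPQ; apply: funext => A; apply: propext.
  by apply: contrapT => h; apply: hn; exists A.
have [PA|nPA] := pselect (sval P A).
- have nQA : ~ sval Q A by move=> QA; apply: hA; split.
  have := hc _ _ (nbhs_bs PA) (nbhs_bs (uNC (yult Q) nQA)).
  by case=> R [RA RnA]; exact: (udisj (yult R) RA RnA (fun x a na => na a)).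
- have QA : sval Q A by apply: contrapT => nQA; apply: hA; split.
  have := hc _ _ (nbhs_bs (uNC (yult P) nPA)) (nbhs_bs QA).
  by case=> R [RnA RA]; exact: (udisj (yult R) RA RnA (fun x a na => na a)).
Qed.

Lemma Y_zero_dim : zero_dim Y.
Proof.
move=> U P oU UP; have [A [PA HA]] := oU P UP.
by exists (bs D A); split=> //; apply: bs_clopen.
Qed.
End Ytop.

Section Ymul.
Variables (X : Type) (mul : X -> X -> X) (J D : set X).
Hypothesis massoc : assoc_op mul.
Hypothesis hJ : is_ideal mul J.
Hypothesis hl : forall x d, D d -> ~ J (mul x d) -> D (mul x d).
Hypothesis hr : forall x d, D d -> ~ J (mul d x) -> D (mul d x).
Hypothesis hDD : forall d d', D d -> D d' -> J (mul d d').

Local Notation rees := (rees_mul mul J).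
Local Notation Y := (@Yt X D).

Lemma reesJ x y : J (mul x y) -> rees (Some x) (Some y) = None.
Proof. by move=> h; rewrite /= asboolT. Qed.
Lemma reesNJ x y : ~ J (mul x y) -> rees (Some x) (Some y) = Some (mul x y).
Proof. by move=> h; rewrite /= asboolF. Qed.

Lemma rees_assoc a b c : rees (rees a b) c = rees a (rees b c).
Proof.
case: a => [x|]; last by [].
case: b => [y|]; last by case: c.
case: c => [z|]; last by case: (pselect (J (mul x y))) => h; [rewrite reesJ|rewrite reesNJ].
case: (pselect (J (mul x y))) => hxy; case: (pselect (J (mul y z))) => hyz.
- by rewrite (reesJ hxy) (reesJ hyz).
- rewrite (reesJ hxy) (reesNJ hyz) reesJ //; rewrite massoc; exact: (hJ z hxy).2.
- rewrite (reesNJ hxy) (reesJ hyz) reesJ //; rewrite -massoc; exact: (hJ x hyz).1.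
- rewrite (reesNJ hxy) (reesNJ hyz); case: (pselect (J (mul (mul x y) z))) => h.
  + by rewrite reesJ // reesJ // massoc.
  + rewrite reesNJ // reesNJ; first by rewrite massoc.
    by rewrite massoc.
Qed.

Lemma img_allowed (f : option X -> option X) (Q : set (set (option X))) :
  ultra Q -> Q (Some @` D) ->
  (forall d, D d -> f (Some d) = None \/ exists2 d', D d' & f (Some d) = Some d') ->
  allowed D (imgf f Q).
Proof.
move=> uQ QD hf; case: (pselect (Q (fun b => f b = None))) => hN.
- left; exists None; apply: funext => A; apply: propext; rewrite /imgf /pr; split.
  + move=> hA; apply: contrapT => nA; apply: (udisj uQ hA hN) => b h1 h2.
    by apply: nA; rewrite -h2.
  + by move=> hA; apply: (uS uQ _ hN) => b ->.
- right; split; first exact: imgf_ultra.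
  rewrite /imgf; apply: (uS uQ _ (uI uQ QD (uNC uQ hN))) => b [[d Dd <-]] /= hb.
  by case: (hf d Dd) => [//|[d' Dd' ->]]; exists d'.
Qed.

Lemma smul_DD P Q : ultra P -> ultra Q -> P (Some @` D) -> Q (Some @` D) ->
  smul rees P Q = pr None.
Proof.
move=> uP uQ PD QD; apply: funext => A; apply: propext; rewrite /smul /pr; split.
- move=> hA; apply: contrapT => nA; apply: (udisj uP hA PD) => a hQ [d Dd ad].
  apply: (udisj uQ hQ QD) => b hb [d' Dd' bd']; apply: nA.
  by rewrite -ad -bd' reesJ // in hb; apply: hDD.
- move=> hA; apply: (uS uP _ PD) => a [d Dd <-]; apply: (uS uQ _ QD) => b [d' Dd' <-].
  by rewrite reesJ //; apply: hDD.
Qed.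

Lemma allowed_smul P Q : allowed D P -> allowed D Q -> allowed D (smul rees P Q).
Proof.
move=> [[a ->]|[uP PD]] [[b ->]|[uQ QD]].
- by left; exists (rees a b).
- apply: (@img_allowed (rees a)) => // d Dd; case: a => [x|]; last by left.
  case: (pselect (J (mul x d))) => h; first by left; rewrite reesJ.
  by right; exists (mul x d); [apply: hl|rewrite reesNJ].
- apply: (@img_allowed (fun a => rees a b)) => // d Dd; case: b => [y|]; last by left.
  case: (pselect (J (mul d y))) => h; first by left; rewrite reesJ.
  by right; exists (mul d y); [apply: hr|rewrite reesNJ].
- by left; exists None; apply: smul_DD.
Qed.

Definition ymul (P Q : Y) : Y :=
  exist _ (smul rees (sval P) (sval Q)) (allowed_smul (svalP P) (svalP Q)).

Lemma Y_assoc : assoc_op ymul.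
Proof.
move=> P Q R; apply: eq_sig_hprop => [x|]; first exact: Prop_irrelevance.
by rewrite /= smulA // => *; rewrite rees_assoc.
Qed.

Lemma Y_cont : continuous (fun p : Y * Y => ymul p.1 p.2).
Proof.
move=> [P Q] V /= hV.
have [C [PQC CV]] := nbhs_bsE hV.
suff [A [B [PA QB H]]] : exists A B, [/\ sval P A, sval Q B &
    forall P' Q' : Y, sval P' A -> sval Q' B -> sval (ymul P' Q') C].
  exists (bs D A, bs D B); first by split; apply: nbhs_bs.
  by move=> [P' Q'] [/= hP hQ]; apply: CV; apply: H.
rewrite /= in PQC.
case: (svalP P) => [[a Pa]|[uP PD]].
  exists [set a], (fun b => C (rees a b)); split => //.
  - by rewrite Pa /pr.
  - by move: PQC; rewrite Pa /smul /pr.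
  - move=> P' Q' hP hQ /=; rewrite /smul; apply: (uS (yult P') _ hP) => a' /= ->.
    exact: hQ.
case: (svalP Q) => [[b Qb]|[uQ QD]].
  exists (fun a => C (rees a b)), [set b]; split => //.
  - by move: PQC; rewrite Qb /smul /pr.
  - by rewrite Qb /pr.
  - move=> P' Q' hP hQ /=; rewrite /smul; apply: (uS (yult P') _ hP) => a' /= h.
    by apply: (uS (yult Q') _ hQ) => b' /= ->.
have CN : C None by move: PQC; rewrite smul_DD.
exists (Some @` D), (Some @` D); split => // P' Q' hP hQ /=; rewrite /smul.
apply: (uS (yult P') _ hP) => a' [d Dd <-]; apply: (uS (yult Q') _ hQ) => b' [d' Dd' <-].
by rewrite reesJ //; apply: hDD.
Qed.

Lemma Y_TzS : TzS ymul.
Proof. split; [exact: Y_assoc|exact: Y_hausdorff|exact: Y_zero_dim|exact: Y_cont]. Qed.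

End Ymul.

Lemma ultra_exists (T : Type) (D : set T) : infinite_set D ->
  exists q : set (set T), [/\ ultra q, q D & forall x, ~ q [set x]].
Proof.
move=> hD.
pose F : set (set T) := fun A => finite_set (D `\` A).
have FF : ProperFilter F.
  apply: Build_ProperFilter_ex.
    move=> A hA; apply: contrapT => hn; apply: hD.
    by apply: sub_finite_set hA => x Dx; split => // Ax; apply: hn; exists x.
  constructor.
  - by rewrite /F setDT; apply: finite_set0.
  - move=> A B hA hB; rewrite /F; apply: (sub_finite_set (B := (D `\` A) `|` (D `\` B))).
      move=> x [Dx nAB]; case: (pselect (A x)) => Ax; last by left.
      by right; split => // Bx; apply: nAB.
    by rewrite finite_setU.
  - by move=> A B AB hA; apply: sub_finite_set hA => x [Dx nB]; split => // Ax; apply: nB; apply: AB.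
have [G [UG FG]] := ultraFilterLemma FF.
have uG : ultra G.
  split.
  - exact: filterT.
  - exact: filter_not_empty.
  - by move=> A B; apply: filterI.
  - by move=> A B; apply: filterS.
  - by move=> A; apply: in_ultra_setVsetC.
exists G; split => //.
- apply: FG; rewrite /F setDv; exact: finite_set0.
- move=> x hx; have : G (~` [set x]).
    by apply: FG; apply: sub_finite_set (finite_set1 x) => y [Dy /= ny]; apply: contrapT.
  by move=> hc; apply: (udisj uG hx hc) => y.
Qed.

Section NotClosed.
Variables (X : Type) (mul : X -> X -> X) (J D : set X).
Hypothesis massoc : assoc_op mul.
Hypothesis hJ : is_ideal mul J.
Hypothesis hl : forall x d, D d -> ~ J (mul x d) -> D (mul x d).
Hypothesis hr : forall x d, D d -> ~ J (mul d x) -> D (mul d x).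
Hypothesis hDD : forall d d', D d -> D d' -> J (mul d d').
Hypothesis hDJ : forall d, D d -> ~ J d.
Hypothesis hDinf : infinite_set D.

Local Notation Y := (@Yt X D).

Definition hemb (a : option X) : Y := exist _ (pr a) (or_introl (ex_intro _ a erefl)).

Lemma not_TzS_closed : ~ TzS_closed (rees_carrier J) (rees_mul mul J).
Proof.
move=> hcl.
have := hcl Y (ymul hl hr hDD) (Y_TzS massoc hJ hl hr hDD) hemb.
have hinj : {in rees_carrier J &, injective hemb}.
  move=> a b _ _ /(congr1 sval) /= hab.
  by have : pr a [set a] by []; rewrite hab /pr.
have hhom : forall a b, rees_carrier J a -> rees_carrier J b ->
    hemb (rees_mul mul J a b) = ymul hl hr hDD (hemb a) (hemb b).
  by move=> a b _ _; apply: eq_sig_hprop => [x|]; [exact: Prop_irrelevance|].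
have hdisc : forall a, rees_carrier J a ->
    exists U : set Y, open U /\ U `&` (hemb @` rees_carrier J) = [set hemb a].
  move=> a ha; exists (bs D [set a]); split; first exact: bs_open.
  apply/seteqP; split.
  - move=> P [Pa [b hb hbP]]; subst P; rewrite /bs /= /pr in Pa.
    by rewrite Pa.
  - by move=> P /= ->; split; [rewrite /bs /= /pr|exists a].
move=> /(_ hinj hhom hdisc) hclosed.
have [q [uq qD qnp]] := ultra_exists hDinf.
have allQ0 : allowed D (imgf Some q).
  right; split; first exact: imgf_ultra.
  by rewrite /imgf; apply: (uS uq _ qD) => x Dx; exists x.
pose Q0 : Y := exist _ (imgf Some q) allQ0.
have hQ0 : closure (hemb @` rees_carrier J) Q0.
  move=> B /nbhs_bsE [A [/= QA AB]].
  have [x [Ax Dx]] := uex uq (uI uq QA qD).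
  exists (hemb (Some x)); split; last by apply: AB.
  by exists (Some x) => //=; apply: hDJ.
have [a _ ha] := hclosed _ hQ0.
have h : pr a [set a] = imgf Some q [set a] by rewrite -[pr a]/(sval (hemb a)) ha.
have hq : q (fun x => Some x = a) by rewrite -[q _]/(imgf Some q [set a]) -h.
case: a {ha h} hq => [x|] hq.
- by apply: (qnp x); apply: (uS uq _ hq) => y /= [->].
- by apply: (u0 uq); apply: (uS uq _ hq) => y.
Qed.

End NotClosed.

Lemma ufin (T I : Type) (q : set (set T)) (W : set I) (F : I -> set T) (A : set T) :
  ultra q -> finite_set W -> q A -> (forall x, A x -> exists2 i, W i & F i x) ->
  exists2 i, W i & q (F i).
Proof.
move=> uq; elim/Pchoice: I => I in W F *.
move=> /finite_seqP [s ->]; elim: s A => [|a s IH] A qA hA.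
  by exfalso; have [x Ax] := uex uq qA; have [i] := hA x Ax.
case: (pselect (q (F a))) => hFa; first by exists a => //=; rewrite inE eqxx.
have [i si qi] : exists2 i, [set` s] i & q (F i).
  apply: (IH (A `&` ~` F a)); first exact: (uI uq qA (uNC uq hFa)).
  move=> x [Ax nFx]; have [i /= hi Fi] := hA x Ax.
  move: hi; rewrite inE => /orP [/eqP eia|hi]; first by subst i.
  by exists i.
by exists i => //=; rewrite inE si orbT.
Qed.

Lemma infinite_range (T : Type) (b : nat -> T) : injective b -> infinite_set (range b).
Proof.
move=> ib hf; apply: infinite_nat.
have : finite_set (b @^-1` range b) by apply: finite_preimage => // x y _ _; apply: ib.
by apply: sub_finite_set => n _; exists n.
Qed.

Fixpoint lin (T : Type) (x : T) (l : list T) : Prop :=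
  match l with nil => False | a :: l => a = x \/ lin x l end.

Section Rec.
Variables (T : Type) (p : set (set T)) (up : ultra p) (pnp : forall x, ~ p [set x]).
Variables (R : set T) (rel : T -> T -> Prop).
Hypothesis pR : p R.
Hypothesis hrel : forall b, R b -> p [set u | rel b u].

Definition Aset (l : list T) : set T :=
  [set x | R x /\ (forall b, lin b l -> rel b x) /\ ~ lin x l].

Lemma pAset l : (forall b, lin b l -> R b) -> p (Aset l).
Proof.
elim: l => [|a l IH] hl.
  by apply: (uS up _ pR) => x Rx; split; [|split; [move=> b|move=> ?]].
have hl' : forall b, lin b l -> R b by move=> b hb; apply: hl; right.
have := uI up (uI up (IH hl') (hrel (hl a (or_introl erefl)))) (uNC up (@pnp a)).
apply: (uS up) => x [[[Rx [hr nl]] ra] na]; split => //; split.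
- by move=> b [<-|hb] //; apply: hr.
- by move=> [ax|]; [apply: na; rewrite ax|].
Qed.

Lemma R_inhab : exists x, R x.
Proof. exact: (uex up pR). Qed.

Definition x0 : T := sval (cid R_inhab).

Definition gsel (l : list T) : T :=
  match pselect (exists x, Aset l x) with left h => sval (cid h) | right _ => x0 end.

Lemma gselP l : (forall b, lin b l -> R b) -> Aset l (gsel l).
Proof.
move=> hl; rewrite /gsel; case: pselect => [h|h]; first exact: svalP (cid h).
by exfalso; apply: h; exact: (uex up (pAset hl)).
Qed.

Fixpoint ls (n : nat) : list T := match n with 0 => nil | S n => gsel (ls n) :: ls n end.
Definition bseq n := gsel (ls n).

Lemma lsR n b : lin b (ls n) -> R b.
Proof.
elim: n b => [|n IH] b //= [<-|hb]; last exact: IH.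
by have [] := gselP IH.
Qed.

Lemma bseqA n : Aset (ls n) (bseq n).
Proof. exact: gselP (@lsR n). Qed.

Lemma ls_mono m n : (m < n)%N -> lin (bseq m) (ls n).
Proof.
elim: n => [//|n IH]; rewrite ltnS leq_eqVlt => /orP [/eqP ->|hmn]; first by left.
by right; apply: IH.
Qed.

Lemma rec_seq : exists T' : set T, [/\ infinite_set T', T' `<=` R &
  forall b b', T' b -> T' b' -> b <> b' -> rel b b' \/ rel b' b].
Proof.
have bneq m n : (m < n)%N -> bseq m <> bseq n.
  move=> hmn heq; have [_ [_ nin]] := bseqA n; apply: nin; rewrite -heq.
  exact: ls_mono.
have brel m n : (m < n)%N -> rel (bseq m) (bseq n).
  move=> hmn; have [_ [hr _]] := bseqA n; apply: hr; exact: ls_mono.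
exists (range bseq); split.
- apply: infinite_range => m n heq; apply/eqP; rewrite eqn_leq; apply/andP; split.
  + by rewrite leqNgt; apply/negP => h; apply: (bneq n m h); rewrite heq.
  + by rewrite leqNgt; apply/negP => h; apply: (bneq m n h).
- by move=> _ [n _ <-]; have [] := bseqA n.
- move=> _ _ [m _ <-] [n _ <-] hne; case: (ltngtP m n) => h.
  + by left; apply: brel.
  + by right; apply: brel.
  + by exfalso; apply: hne; rewrite h.
Qed.
End Rec.

Section Alg.
Variables (X : Type) (mul : X -> X -> X).
Hypothesis massoc : assoc_op mul.
Local Notation Z := (sg_center mul).

Lemma Zmul a b : Z a -> Z b -> Z (mul a b).
Proof.
move=> ha hb x; rewrite -massoc hb massoc ha -massoc //.
Qed.

Lemma sq2 b b' u : Z b' -> Z u ->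
  mul (mul b u) (mul b' u) = mul (mul b b') (mul u u).
Proof.
move=> hb' hu; rewrite -[RHS]massoc -massoc; congr (mul b).
by rewrite massoc -hb' -massoc.
Qed.

Lemma idealR J x y : is_ideal mul J -> J x -> J (mul x y).
Proof. by move=> hJ hx; exact: (hJ y x hx).2. Qed.
Lemma idealL J x y : is_ideal mul J -> J y -> J (mul x y).
Proof. by move=> hJ hy; exact: (hJ x y hy).1. Qed.

Lemma sq1 a x y : Z a -> mul (mul a x) (mul a y) = mul (mul a a) (mul x y).
Proof. by move=> ha; rewrite -massoc [mul x (mul a y)]massoc -ha -massoc massoc. Qed.

Definition goodJT (J T' : set X) := [/\ is_ideal mul J, infinite_set T', T' `<=` Z,
  (forall t, T' t -> ~ J t) & (forall t t', T' t -> T' t' -> J (mul t t'))].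

Lemma selfJ J b c : is_ideal mul J -> J (mul c c) -> b = mul b c -> J b.
Proof.
move=> hJ hc hb; have -> : b = mul b (mul c c) by rewrite massoc -!hb.
exact: idealL.
Qed.

Lemma lvl1 J0 Q : is_ideal mul J0 -> infinite_set Q -> Q `<=` Z ->
  (forall u, Q u -> ~ J0 u) -> (forall u, Q u -> J0 (mul u u)) ->
  exists J T', goodJT J T'.
Proof.
move=> hJ0 Qinf QZ QnJ QJ.
have [p [up pQ pnp]] := ultra_exists Qinf.
pose P b := [set w | ~ J0 w /\ exists2 u, Q u & w = mul b u].
case: (pselect (exists2 b, Q b & infinite_set (P b))) => [[b Qb Pinf]|hfin].
  exists J0, (P b); rewrite /goodJT; split => //.
  - by move=> w [_ [u Qu ->]]; apply: Zmul; apply: QZ.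
  - by move=> w [].
  - move=> _ _ [_ [u Qu ->]] [_ [u' Qu' ->]].
    rewrite -massoc [mul u (mul b u')]massoc -(QZ b Qb u) -massoc massoc.
    by apply: idealR => //; apply: QJ.
have Pfin b : Q b -> finite_set (P b) by move=> Qb; apply: contrapT => h; apply: hfin; exists b.
pose S b := [set u | Q u /\ J0 (mul b u)].
pose R := [set b | Q b /\ p (S b)].
case: (pselect (p R)) => pR.
  have [T' [Tinf TR Trel]] := rec_seq up pnp pR (rel := fun b u => J0 (mul b u))
    (fun b Rb => uS up (fun u (h : S b u) => h.2) Rb.2).
  exists J0, T'; rewrite /goodJT; split => //.
  - by move=> t /TR [/QZ].
  - by move=> t /TR [/QnJ].
  - move=> t t' Tt Tt'; case: (pselect (t = t')) => [<-|ne]; first by apply: QJ; case: (TR _ Tt).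
    case: (Trel _ _ Tt Tt' ne) => // h; by rewrite (QZ t) //; case: (TR _ Tt).
pose R' := [set b | Q b /\ ~ R b].
have pR' : p R' by apply: (uS up _ (uI up pQ (uNC up pR))) => b [].
have hw b : exists w, R' b -> P b w /\ p [set u | mul b u = w].
  case: (pselect (R' b)) => [[Qb nRb]|]; last by move=> h; exists b.
  have nS : ~ p (S b) by move=> h; apply: nRb.
  have [w Pw pw] := ufin (F := fun w => [set u | mul b u = w]) up (Pfin b Qb)
    (uI up pQ (uNC up nS))
    (fun u h => ex_intro2 _ _ (mul b u) (conj (fun hj => h.2 (conj h.1 hj)) (ex_intro2 _ _ u h.1 erefl)) erefl).
  by exists w.
have [wf hwf] := choice hw.
pose W := wf @` R'.
have Wprop w : W w -> [/\ Z w, ~ J0 w & exists2 b, R' b & p [set u | mul b u = w]].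
  move=> [b R'b <-]; have [[hnJ [u Qu hu]] pw] := hwf b R'b; split => //; last by exists b.
  by rewrite hu; apply: Zmul; apply: QZ; [exact: R'b.1|exact: Qu].
case: (pselect (finite_set W)) => Wfin; last first.
  exists J0, W; rewrite /goodJT; split => //.
  - by move=> w /Wprop [].
  - by move=> w /Wprop [].
  - move=> w w' /Wprop [_ _ [b R'b pb]] /Wprop [_ _ [b' R'b' pb']].
    have [u [[Qu hu] hu']] := uex up (uI up (uI up pQ pb) pb').
    rewrite -hu -hu' sq2; [apply: idealL => //; exact: QJ|exact: QZ R'b'.1|exact: QZ].
have [w Ww pR''] := ufin (F := fun w => [set b | R' b /\ wf b = w]) up Wfin pR'
  (fun b h => ex_intro2 _ _ (wf b) (ex_intro2 _ _ b h erefl) (conj h erefl)).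
have [Zw nJw _] := Wprop w Ww.
have [T' [Tinf TR Trel]] := rec_seq up pnp pR'' (rel := fun b u => mul b u = w)
  (fun b Rb => uS up (fun u (h : mul b u = wf b) => etrans h Rb.2) (hwf b Rb.1).2).
have TQ : T' `<=` Q by move=> t /TR [[]].
have Trel' t t' : T' t -> T' t' -> t <> t' -> mul t t' = w.
  move=> Tt Tt' ne; case: (Trel _ _ Tt Tt' ne) => // h.
  by rewrite (QZ t) //; apply: TQ.
pose J := [set x | J0 x \/ x = w \/ exists z, x = mul w z].
exists J, T'; rewrite /goodJT; split => //.
- move=> x y [hy|[->|[z ->]]]; split.
  + by left; apply: idealL.
  + by left; apply: idealR.
  + by right; right; exists x; rewrite Zw.
  + by right; right; exists x.
  + by right; right; exists (mul x z); rewrite massoc -Zw -massoc.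
  + by right; right; exists (mul z x); rewrite massoc.
- by move=> t /TQ /QZ.
- move=> t Tt hJt; have [t' [Tt' ne]] : exists t', T' t' /\ t <> t'.
    apply: contrapT => hn; apply: Tinf; apply: (sub_finite_set (B := [set t])) => // x Tx.
    by apply: contrapT => nx; apply: hn; exists x; split => // tx; apply: nx.
  have Zt' : Z t' by apply: QZ; apply: TQ.
  have htt := Trel' t t' Tt Tt' ne.
  case: hJt => [|[htw|[z htw]]]; first exact: QnJ (TQ _ Tt).
  + apply: (QnJ t (TQ _ Tt)); apply: (@selfJ J0 t t') => //; first by apply: QJ; apply: TQ.
    by rewrite htt.
  + apply: (QnJ t (TQ _ Tt)); apply: (@selfJ J0 t (mul t' z)) => //.
      rewrite sq1 //; apply: idealR => //; apply: QJ; exact: TQ.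
    by rewrite massoc htt.
- move=> t t' Tt Tt'; case: (pselect (t = t')) => [<-|ne]; first by left; apply: QJ; apply: TQ.
  by right; left; apply: Trel'.
Qed.
End Alg.

Lemma pigeon (T I : Type) (W : set I) (F : I -> set T) (A : set T) :
  finite_set W -> infinite_set A -> (forall x, A x -> exists2 i, W i & F i x) ->
  exists2 i, W i & infinite_set (A `&` F i).
Proof.
move=> Wfin Ainf hA; apply: contrapT => hn; apply: Ainf.
apply: (sub_finite_set (B := \bigcup_(i in W) (A `&` F i))).
  by move=> x Ax; have [i Wi Fi] := hA x Ax; exists i.
apply: bigcup_finite => // i Wi; apply: contrapT => h; apply: hn; by exists i.
Qed.

Section Comb.
Variables (X : Type) (mul : X -> X -> X).
Hypothesis massoc : assoc_op mul.
Local Notation Z := (sg_center mul).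
Local Notation sp := (spow mul).

Lemma spowSl t n : sp t n.+1 = mul t (sp t n).
Proof. elim: n => [//|n IH]; change (mul (sp t n.+1) t = mul t (sp t n.+1)); by rewrite {1}IH -massoc. Qed.

Lemma spow_add t a b : sp t (a + b).+1 = mul (sp t a) (sp t b).
Proof.
elim: b => [|b IH]; first by rewrite addn0.
by rewrite addnS; change (mul (sp t (a + b).+1) t = mul (sp t a) (mul (sp t b) t)); rewrite IH massoc.
Qed.

Lemma Zspow t n : Z t -> Z (sp t n).
Proof. move=> ht; elim: n => [//|n IH] /=; exact: Zmul. Qed.

Lemma spow_mono J t M k : is_ideal mul J -> J (sp t M) -> (M <= k)%N -> J (sp t k).
Proof.
move=> hJ hM; elim: k => [|k IH]; first by rewrite leqn0 => /eqP <-.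
rewrite leq_eqVlt => /orP [/eqP <- //|]; rewrite ltnS => /IH h /=.
exact: (idealR _ hJ h).
Qed.

Lemma selfpowJ J t M : is_ideal mul J -> Z t -> J (sp t M) ->
  (t = mul t t \/ exists w, t = mul t (mul t w)) -> J t.
Proof.
move=> hJ ht hM [htt|[w hw]].
  have : forall k, t = sp t k by elim => [//|k IH] /=; rewrite -IH.
  by move=> /(_ M) ->.
have hk : forall k, exists y, t = mul (sp t k.+1) y.
  elim => [|k [y hy]]; first by exists w; rewrite /= -massoc.
  exists (mul y w); rewrite {1}hw {1}hy -massoc.
  change (mul (sp t k.+1) (mul y (mul t w)) = mul (mul (sp t k.+1) t) (mul y w)).
  rewrite -massoc; congr (mul (sp t k.+1)).
  by rewrite massoc -ht -massoc.
have [y ->] := hk M; apply: (idealR _ hJ); apply: (spow_mono hJ hM); exact: leqW.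
Qed.

Definition ext_ideal (J : set X) (u : X) := [set x | J x \/ x = u \/ exists z, x = mul u z].

Lemma ext_idealP J u : is_ideal mul J -> Z u -> is_ideal mul (ext_ideal J u).
Proof.
move=> hJ Zu x y [hy|[->|[z ->]]]; split.
+ by left; apply: (idealL x hJ hy).
+ by left; apply: (idealR x hJ hy).
+ by right; right; exists x; rewrite Zu.
+ by right; right; exists x.
+ by right; right; exists (mul x z); rewrite massoc -Zu -massoc.
+ by right; right; exists (mul z x); rewrite massoc.
Qed.

Lemma claimN N : forall J F, is_ideal mul J -> infinite_set F -> F `<=` Z ->
  (forall t, F t -> ~ J t) -> (forall t, F t -> J (sp t N)) ->
  exists J' T', goodJT mul J' T'.
Proof.
elim: N => [|n IH] J F hJ Finf FZ FnJ FJ.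
  by have [t Ft] := infinite_setN0 Finf; exfalso; apply: FnJ Ft (FJ t Ft).
pose G := [set t | F t /\ J (sp t n)].
case: (pselect (finite_set G)) => Gfin; last first.
  apply: (IH J G) => //; [by move=> t [/FZ]|by move=> t [/FnJ]|by move=> t []].
pose F' := F `\` G.
have F'inf : infinite_set F' by apply: infinite_setD.
have F'nJ t : F' t -> ~ J (sp t n) by move=> [Ft nG] h; apply: nG.
have F'J t : F' t -> J (mul (sp t n) (sp t n)).
  move=> [Ft _]; rewrite -spow_add; apply: (spow_mono hJ (FJ t Ft)).
  by rewrite ltnS leq_addl.
pose V := (fun t => sp t n) @` F'.
case: (pselect (finite_set V)) => Vfin; last first.
  apply: (lvl1 massoc hJ Vfin).
  - by move=> _ [t [Ft _] <-]; apply: Zspow; apply: FZ.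
  - by move=> _ [t F't <-]; apply: F'nJ.
  - by move=> _ [t F't <-]; apply: F'J.
have [u Vu F''inf] := pigeon (F := fun u => [set t | sp t n = u]) Vfin F'inf
  (fun t h => ex_intro2 _ _ (sp t n) (ex_intro2 _ _ t h erefl) erefl).
have [t0 F't0 hu] := Vu.
have Zu : Z u by rewrite -hu; apply: Zspow; apply: FZ; case: F't0.
destruct n as [|n].
  exfalso; apply: F''inf; apply: sub_finite_set (finite_set1 u) => t [_ /= ->] //.
apply: (IH (ext_ideal J u) (F' `&` [set t | sp t n.+1 = u])) => //.
- exact: ext_idealP.
- by move=> t [[/FZ]].
- move=> t [[Ft _] htu] [|[htu'|[z htu']]]; first exact: FnJ.
  + apply: (FnJ t Ft); apply: (selfpowJ (M := n.+2)) => //; [exact: FZ|exact: FJ|].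
    move: htu'; rewrite -htu spowSl => h; destruct n as [|n]; first by left.
    by right; exists (sp t n); rewrite -spowSl.
  + apply: (FnJ t Ft); apply: (selfpowJ (M := n.+2)) => //; [exact: FZ|exact: FJ|].
    move: htu'; rewrite -htu spowSl => h; destruct n as [|n].
      by right; exists z; rewrite massoc.
    right; exists (mul (sp t n) z).
    by rewrite [mul t (mul (sp t n) z)]massoc -spowSl massoc.
- by move=> t [_ htu]; right; left.
Qed.
End Comb.

Lemma exmin (P : nat -> Prop) k : P k -> exists m, P m /\ forall j, (j < m)%N -> ~ P j.
Proof.
have [n] := ubnP k; elim: n k => // n IH k hk Pk.
case: (pselect (exists2 j, (j < k)%N & P j)) => [[j jk Pj]|hn].
  by apply: (IH j) => //; apply: leq_trans jk _; rewrite -ltnS.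
by exists k; split => // j jk Pj; apply: hn; exists j.
Qed.

Section Top.
Local Open Scope card_scope.
Variables (X : Type) (mul : X -> X -> X).
Hypothesis massoc : assoc_op mul.
Local Notation Z := (sg_center mul).
Local Notation sp := (spow mul).

Lemma per t j d : sp t (j + d.+1) = sp t j -> forall r, sp t (j + r * d.+1) = sp t j.
Proof.
move=> h; elim => [|r IH]; first by rewrite mul0n addn0.
have -> : j + r.+1 * d.+1 = (j + r * d.+1 + d).+1 by rewrite mulSn; lia.
by rewrite spow_add // IH -spow_add // -addnS.
Qed.

Lemma topcomb E T : is_ideal mul E -> infinite_set T -> T `<=` Z ->
  (forall t, T t -> ~ E t) -> (forall t, T t -> exists k, E (sp t k)) ->
  exists J T', goodJT mul J T'.
Proof.
move=> hE Tinf TZ TnE TE.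
case: (pselect (exists N, infinite_set [set t | T t /\ E (sp t N)])) => [[N hN]|hN].
  apply: (claimN massoc (N := N) hE hN); [by move=> t [/TZ]|by move=> t [/TnE]|by move=> t []].
pose Q := [set u | Z u /\ ~ E u /\ E (mul u u)].
apply: (lvl1 massoc (Q := Q) hE); [|by move=> u []|by move=> u [_ []]|by move=> u [_ []]].
move=> /finite_set_leP [n hQn].
pose K := (n + n).+1.
have : finite_set [set t | T t /\ E (sp t K)] by apply: contrapT => h; apply: hN; exists K.
move=> hfin; have [t [Tt ntK]] := infinite_setN0 (infinite_setD Tinf hfin).
have nEK : ~ E (sp t K) by move=> h; apply: ntK; split.
have [k0 hk0] := TE t Tt.
have [m [Em mmin]] := exmin (P := fun k => E (sp t k)) hk0.
have Km : (K < m)%N.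
  rewrite ltnNge; apply/negP => hm; apply: nEK; exact: (spow_mono hE Em hm).
pose f i := sp t (m.-1 - i).
have hm1 : m = m.-1.+1 by rewrite prednK // (leq_ltn_trans _ Km).
have fQ i : (i < n.+1)%N -> Q (f i).
  move=> hi; split; first by apply: Zspow => //; apply: TZ.
  split; first by apply: mmin; rewrite {2}hm1 ltnS leq_subr.
  rewrite /f -spow_add //; apply: (spow_mono hE Em).
  move: Km hi; rewrite /K; lia.
have finj : {in `I_n.+1 &, injective f}.
  move=> i i' hi hi' hf; apply: contrapT => ne.
  move: hi hi'; rewrite !inE /= => hi hi'.
  wlog lt : i i' hi hi' hf ne / (i' < i)%N.
    move=> H; case: (ltngtP i' i) => h; [exact: H h|apply: (H i' i) => //; by move=> e; apply: ne|exact: ne].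
  pose j := m.-1 - i; pose d := (i - i').-1.
  have hjd : j + d.+1 = m.-1 - i' by rewrite /j /d; move: lt hi hi' Km; rewrite /K; lia.
  have := per (j := j) (d := d) (t := t); rewrite hjd => /(_ (esym hf) m) hp.
  apply: (mmin j); first by rewrite /j {2}hm1 ltnS leq_subr.
  rewrite -hp; apply: (spow_mono hE Em).
  by apply: leq_trans (leq_addl _ _); rewrite mulnS leq_addr.
have : `I_n.+1 #<= `I_n.
  apply: (card_le_trans _ hQn); rewrite -(card_le_eql (inj_card_eq finj)).
  by apply: subset_card_le => _ [i hi <-]; apply: fQ.
by rewrite card_le_II ltnn.
Qed.
End Top.

Theorem lemma7p3 (X : Type) (mul : X -> X -> X) (assocX : assoc_op mul)
  (hX : ideally_TzS_closed mul) (e : X)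
  (he : idempotent_el mul e) (hez : sg_center mul e)
  (hb : bounded_on mul (maxsubgroup mul e `&` sg_center mul)) :
  finite_set ((inf_root mul (maxsubgroup mul e) `&` sg_center mul)
               `\` maxsubgroup mul e).
Proof.
apply: contrapT => Tinf.
pose H := maxsubgroup mul e.
pose E := [set x | exists y, x = mul e y].
have hE : is_ideal mul E.
  move=> x y [w ->]; split.
  - by exists (mul x w); rewrite assocX -hez -assocX.
  - by exists (mul w x); rewrite assocX.
have TnE t : ((inf_root mul H `&` sg_center mul) `\` H) t -> ~ E t.
  move=> [[[k hk] Zt] nHt] [y ty]; apply: nHt.
  have et : mul e t = t by rewrite ty assocX he.
  case: k hk => [|k] hk; first exact: hk.
  have [_ [_ [y0 [ey0 y0e hy0 y0h]]]] := hk.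
  split => //; split; first by rewrite Zt.
  exists (mul (spow mul t k) y0); split.
  - by rewrite assocX hez -assocX ey0.
  - by rewrite -assocX y0e.
  - by rewrite assocX -spowSl.
  - by rewrite -assocX -Zt assocX.
have [J [T' [hJ T'inf T'Z T'nJ T'J]]] := topcomb assocX hE Tinf
  (fun t h => h.1.2) TnE (fun t h => match h.1.1 with ex_intro k hk => ex_intro _ k (ex_intro _ (spow mul t k) (esym hk.1)) end).
pose D := [set w | ~ J w /\ exists2 t, T' t & (w = t \/ exists z, w = mul t z)].
have hl x d : D d -> ~ J (mul x d) -> D (mul x d).
  move=> [_ [t Tt [->|[z ->]]]] hn; split => //; exists t => //; right.
  - by exists x; rewrite (T'Z t Tt).
  - by exists (mul x z); rewrite assocX -(T'Z t Tt) -assocX.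
have hr x d : D d -> ~ J (mul d x) -> D (mul d x).
  move=> [_ [t Tt [->|[z ->]]]] hn; split => //; exists t => //; right.
  - by exists x.
  - by exists (mul z x); rewrite assocX.
have hDD d d' : D d -> D d' -> J (mul d d').
  move=> [_ [t Tt htd]] [_ [t' Tt' htd']].
  have Jtt := T'J t t' Tt Tt'.
  suff : (exists w, mul d d' = mul (mul t t') w) \/ mul d d' = mul t t'.
    by case => [[w ->]|->]; [exact: (idealR _ hJ Jtt)|exact: Jtt].
  case: htd => [->|[z ->]]; case: htd' => [->|[z' ->]].
  - by right.
  - by left; exists z'; rewrite assocX.
  - by left; exists z; rewrite -assocX -(T'Z t' Tt') assocX.
  - left; exists (mul z z').
    by rewrite -assocX [mul z (mul t' z')]assocX -(T'Z t' Tt') -assocX assocX.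
have hDJ d : D d -> ~ J d by case.
have Dinf : infinite_set D.
  apply: (sub_infinite_set _ T'inf) => t Tt; split; first exact: T'nJ.
  by exists t => //; left.
exact: (not_TzS_closed assocX hJ hl hr hDD hDJ Dinf (hX J hJ)).
Qed.
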